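(* Let $\alpha\in(0,1)$, $\gamma,\beta>0$, $r_0>0$, $Y=B(0,r_0)\subset\mathbb R\oplus\mathbb R^{d-1}$, $\mathcal X(x)=\|x\|^\alpha Ax$ with $A=\gamma\,\mathrm{Id}_{\mathbb R}\oplus(-\beta\,\mathrm{Id}_{\mathbb R^{d-1}})$. For a trajectory $x(t)$ of $\mathcal X$ in $Y$, with $\theta(t)$ the angle between $x(t)$ and $\mathbb R\times\{0\}$ ($\tan\theta=\|x_s\|/\|x_u\|$), $$\frac{d}{dt}\|x\|^{-\alpha}=\alpha(\beta\sin^2\theta-\gamma\cos^2\theta)=\alpha\xi(\tan\theta),\qquad \xi(s)=\frac{\beta s^2-\gamma}{s^2+1}.$$ In particular, for every piece of trajectory $x\colon[0,T]\to Y$ and $t\in[0,T]$: $-\gamma\alpha\le\frac{d}{dt}\|x\|^{-\alpha}\le\beta\alpha$, $\|x(t)\|^{-\alpha}\le\|x(T)\|^{-\alpha}+\gamma\alpha(T-t)$, and $\|x(t)\|^{-\alpha}\le\|x(0)\|^{-\alpha}+\beta\alpha t$. Moreover, if $x\colon[0,T_0]\to Y$ enters $Y$ at time $0$ and leaves it at time $T_0$ (so $\|x(0)\|=\|x(T_0)\|=r_0$), and $s$ satisfies $\tan\theta(0)>s>\tan\theta(T_0)$ with $T_s$ the time at which $\tan\theta(T_s)=s$, then $\|x(t)\|^{-\alpha}\ge r_0^{-\alpha}+\alpha\xi(s)t$ for all $t\in[0,T_s]$ and $\|x(t)\|^{-\alpha}\ge r_0^{-\alpha}-\alpha\xi(s)(T_0-t)$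 for all $t\in[T_s,T_0]$.
   Context: $T_s$ is well defined because $\tan\theta$ is strictly decreasing along trajectories in $Y$. *)

(* Defs.v *)
From Stdlib Require Import Reals List.
From Coquelicot Require Import Rbar.
Open Scope R_scope.

(* State space R (+) R^n with n = d-1.  A point is (u, v) with u : R the
   unstable coordinate and v : nat -> R the stable part, of which only the
   coordinates v 0, ..., v (n-1) are used. *)

Definition sqnorm (n : nat) (v : nat -> R) : R :=
  fold_right Rplus 0 (map (fun i => v i ^ 2) (seq 0 n)).

Definition enorm (n : nat) (u : R) (v : nat -> R) : R :=
  sqrt (u ^ 2 + sqnorm n v).

Definition trajnorm (n : nat) (xu : R -> R) (xs : nat -> R -> R) (t : R) : R :=
  enorm n (xu t) (fun i => xs i t).

Definition is_traj (n : nat) (alpha gamma beta : R)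
    (xu : R -> R) (xs : nat -> R -> R) (a b : R) : Prop :=
  forall t, a <= t <= b ->
    derivable_pt_lim xu t (Rpower (trajnorm n xu xs t) alpha * (gamma * xu t)) /\
    (forall i, (i < n)%nat ->
       derivable_pt_lim (xs i) t
         (Rpower (trajnorm n xu xs t) alpha * (- beta * xs i t))).

Definition theta (n : nat) (xu : R -> R) (xs : nat -> R -> R) (t : R) : R :=
  if Req_EM_T (xu t) 0 then PI / 2
  else atan (sqrt (sqnorm n (fun i => xs i t)) / Rabs (xu t)).

Definition tantheta (n : nat) (xu : R -> R) (xs : nat -> R -> R) (t : R) : Rbar :=
  if Req_EM_T (xu t) 0 then p_infty else Finite (tan (theta n xu xs t)).

Definition xi (beta gamma s : R) : R := (beta * s ^ 2 - gamma) / (s ^ 2 + 1).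

(* Main.v *)
Require Import Defs.
From Stdlib Require Import Reals Lra Lia List.
From Coquelicot Require Import Rbar.
Open Scope R_scope.

Lemma D_eq f x l l' : derivable_pt_lim f x l -> l = l' -> derivable_pt_lim f x l'.
Proof. intros H ->; exact H. Qed.
Lemma D_mult f g x a b : derivable_pt_lim f x a -> derivable_pt_lim g x b ->
  derivable_pt_lim (fun y => f y * g y) x (a * g x + f x * b).
Proof. intros; now apply (derivable_pt_lim_mult f g). Qed.
Lemma D_plus f g x a b : derivable_pt_lim f x a -> derivable_pt_lim g x b ->
  derivable_pt_lim (fun y => f y + g y) x (a + b).
Proof. intros; now apply (derivable_pt_lim_plus f g). Qed.
Lemma D_opp f x a : derivable_pt_lim f x a ->
  derivable_pt_lim (fun y => - f y) x (- a).
Proof. intros; now apply (derivable_pt_lim_opp f). Qed.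
Lemma D_comp f g x a b : derivable_pt_lim f x a -> derivable_pt_lim g (f x) b ->
  derivable_pt_lim (fun y => g (f y)) x (b * a).
Proof. intros; now apply (derivable_pt_lim_comp f g). Qed.
Lemma D_sq f x a : derivable_pt_lim f x a ->
  derivable_pt_lim (fun y => f y ^ 2) x (2 * f x * a).
Proof. intros H. eapply D_eq. apply (D_comp f (fun z => z ^ 2) x a (INR 2 * f x ^ Init.Nat.pred 2) H).
  apply derivable_pt_lim_pow. simpl; ring. Qed.
Lemma D_const c x : derivable_pt_lim (fun _ => c) x 0.
Proof. apply (derivable_pt_lim_const c). Qed.
Lemma D_expK K x : derivable_pt_lim (fun y => exp (K * y)) x (K * exp (K * x)).
Proof. eapply D_eq. apply (D_comp (fun y => K * y) exp).
  eapply D_eq. apply (D_mult (fun _ => K) (fun y => y)). apply D_const. apply derivable_pt_lim_id. reflexivity.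
  apply derivable_pt_lim_exp. ring. Qed.

Lemma mono_le (f d : R -> R) a b : a <= b ->
  (forall t, a <= t <= b -> derivable_pt_lim f t (d t)) ->
  (forall t, a <= t <= b -> 0 <= d t) -> f a <= f b.
Proof.
  intros Hab Hd Hp. destruct (Req_dec a b) as [->|Hne]. lra.
  destruct (MVT_cor2 f d a b) as [c [Hc Hc2]]. lra. exact Hd.
  assert (0 <= d c) by (apply Hp; lra). nra.
Qed.

Definition lsum (l : list nat) (g : nat -> R) : R := fold_right Rplus 0 (map g l).

Lemma sqnorm_ge0 n v : 0 <= sqnorm n v.
Proof. unfold sqnorm. induction (seq 0 n); cbn [map fold_right]. lra.
  pose proof (pow2_ge_0 (v a)). lra. Qed.

Lemma D_sum (xs : nat -> R -> R) (k : R) t (l : list nat) :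
  (forall i, In i l -> derivable_pt_lim (xs i) t (k * xs i t)) ->
  derivable_pt_lim (fun y => fold_right Rplus 0 (map (fun i => xs i y ^ 2) l)) t
     (2 * k * fold_right Rplus 0 (map (fun i => xs i t ^ 2) l)).
Proof.
  induction l as [|a l IH]; intros H; cbn [map fold_right].
  - eapply D_eq. apply D_const. ring.
  - eapply D_eq. apply D_plus. apply D_sq. apply H; simpl; auto.
    apply IH. intros; apply H; simpl; auto. ring.
Qed.

Lemma Rpower0 a : Rpower 0 a = 1.
Proof. unfold Rpower, ln. destruct (Rlt_dec 0 0) as [h|h].
  exfalso; exact (Rlt_irrefl 0 h). rewrite Rmult_0_r; apply exp_0. Qed.

Lemma atan_form beta gamma q :
  beta * sin (atan q) ^ 2 - gamma * cos (atan q) ^ 2 = (beta * q ^ 2 - gamma) / (q ^ 2 + 1).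
Proof.
  rewrite sin_atan, cos_atan.
  assert (H1 : 0 < 1 + q²) by (pose proof (Rle_0_sqr q); lra).
  assert (H2 : sqrt (1 + q²) ^ 2 = 1 + q²) by (rewrite pow2_sqrt; lra).
  assert (H3 : 0 < sqrt (1 + q²)) by (apply sqrt_lt_R0; lra).
  unfold Rdiv. rewrite !Rpow_mult_distr, pow_inv, H2. unfold Rsqr. field.
  nra.
Qed.

Section T.
Variables (n : nat) (alpha gamma beta : R) (xu : R -> R) (xs : nat -> R -> R).
Let S t := sqnorm n (fun i => xs i t).
Let F t := xu t ^ 2 + S t.
Let c t := Rpower (trajnorm n xu xs t) alpha.

Lemma S_deriv a b t : is_traj n alpha gamma beta xu xs a b -> a <= t <= b ->
  derivable_pt_lim S t (2 * (c t * - beta) * S t).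
Proof.
  intros H Ht. destruct (H t Ht) as [_ H2]. unfold S, sqnorm.
  apply (D_sum xs (c t * - beta) t (seq 0 n)).
  intros i Hi. apply in_seq in Hi. eapply D_eq. apply H2. lia. unfold c; ring.
Qed.

Lemma F_deriv a b t : is_traj n alpha gamma beta xu xs a b -> a <= t <= b ->
  derivable_pt_lim F t (2 * c t * (gamma * xu t ^ 2 - beta * S t)).
Proof.
  intros H Ht. unfold F. eapply D_eq. apply D_plus. apply D_sq. apply (H t Ht).
  apply (S_deriv a b t H Ht). unfold c; ring.
Qed.

Lemma c_bounds r0 t : 0 < r0 -> 0 <= alpha -> trajnorm n xu xs t <= r0 ->
  0 <= c t <= 1 + Rpower r0 alpha.
Proof.
  intros Hr Ha Ht. unfold c. split. unfold Rpower; left; apply exp_pos.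
  assert (0 <= trajnorm n xu xs t) by (unfold trajnorm, enorm; apply sqrt_pos).
  assert (0 < Rpower r0 alpha) by (unfold Rpower; apply exp_pos).
  destruct (Req_dec (trajnorm n xu xs t) 0) as [E|E].
  - rewrite E. rewrite Rpower0. lra.
  - assert (Rpower (trajnorm n xu xs t) alpha <= Rpower r0 alpha).
    apply Rle_Rpower_l; lra. lra.
Qed.

Lemma F_pos T r0 : 0 < r0 -> 0 <= alpha -> 0 < beta -> 0 < gamma ->
  is_traj n alpha gamma beta xu xs 0 T ->
  (forall t, 0 <= t <= T -> trajnorm n xu xs t <= r0) -> 0 < F 0 ->
  forall t, 0 <= t <= T -> 0 < F t.
Proof.
  intros Hr Ha Hb Hg HT HN HF0 t Ht.
  set (M := 1 + Rpower r0 alpha). set (K := 2 * beta * M).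
  assert (HG : F 0 * exp (K * 0) <= F t * exp (K * t)).
  { apply (mono_le (fun x => F x * exp (K * x))
      (fun x => 2 * c x * (gamma * xu x ^ 2 - beta * S x) * exp (K * x)
                + F x * (K * exp (K * x)))).
    lra. intros x Hx. apply (D_mult F (fun y => exp (K * y))). apply (F_deriv 0 T x HT ltac:(lra)). apply D_expK.
    intros x Hx. assert (Hc := c_bounds r0 x Hr Ha (HN x ltac:(lra))).
    pose proof (exp_pos (K * x)). pose proof (sqnorm_ge0 n (fun i => xs i x)).
    pose proof (pow2_ge_0 (xu x)). fold (S x) in H0. unfold F.
    assert (0 <= 2 * c x * (gamma * xu x ^ 2 - beta * S x) + (xu x ^ 2 + S x) * K).
    { unfold K. assert (0 <= c x * gamma * xu x ^ 2) by (apply Rmult_le_pos; [apply Rmult_le_pos|]; unfold M in *; lra).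
      assert (0 <= (M - c x) * beta * S x) by (apply Rmult_le_pos; [apply Rmult_le_pos|]; unfold M in *; lra).
      assert (0 <= xu x ^ 2 * beta * M) by (apply Rmult_le_pos; [apply Rmult_le_pos|]; unfold M in *; lra).
      nra. }
    nra. }
  rewrite Rmult_0_r, exp_0 in HG. pose proof (exp_pos (K * t)).
  assert (0 <= F t) by (unfold F; pose proof (sqnorm_ge0 n (fun i => xs i t)); pose proof (pow2_ge_0 (xu t)); fold (S t) in *; lra).
  destruct H0 as [H0|H0]. exact H0. rewrite <- H0 in HG. lra.
Qed.

Lemma u_nz T r0 : 0 < r0 -> 0 <= alpha -> 0 < beta -> 0 < gamma ->
  is_traj n alpha gamma beta xu xs 0 T ->
  (forall t, 0 <= t <= T -> trajnorm n xu xs t <= r0) -> xu T <> 0 ->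
  forall t, 0 <= t <= T -> xu t <> 0.
Proof.
  intros Hr Ha Hb Hg HT HN HuT t Ht.
  set (M := 1 + Rpower r0 alpha). set (K := 2 * gamma * M).
  assert (HG : - (xu t ^ 2 * exp (- K * t)) <= - (xu T ^ 2 * exp (- K * T))).
  { apply (mono_le (fun x => - (xu x ^ 2 * exp (- K * x)))
      (fun x => - (2 * xu x * (c x * (gamma * xu x)) * exp (- K * x)
                + xu x ^ 2 * (- K * exp (- K * x))))).
    lra. intros x Hx. apply D_opp. apply (D_mult (fun y => xu y ^ 2) (fun y => exp (- K * y))). apply D_sq. apply (HT x). lra. apply D_expK.
    intros x Hx. assert (Hc := c_bounds r0 x Hr Ha (HN x ltac:(lra))).
    pose proof (exp_pos (- K * x)).
    pose proof (pow2_ge_0 (xu x)).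
    assert (0 <= (M - c x) * gamma * xu x ^ 2) by (apply Rmult_le_pos; [apply Rmult_le_pos|]; unfold M in *; lra).
    assert (0 <= exp (- K * x) * ((M - c x) * gamma * xu x ^ 2)) by (apply Rmult_le_pos; lra).
    match goal with |- 0 <= ?e => replace e with (2 * (exp (- K * x) * ((M - c x) * gamma * xu x ^ 2))) by (unfold K; ring) end.
    lra. }
  intros E. rewrite E in HG. pose proof (exp_pos (- K * T)).
  assert (0 < xu T ^ 2) by (pose proof (Rsqr_pos_lt _ HuT); unfold Rsqr in *; nra).
  assert (0 < xu T ^ 2 * exp (- K * T)) by (apply Rmult_lt_0_compat; lra).
  replace (0 ^ 2) with 0 in HG by ring. lra.
Qed.

Lemma P_deriv a b t : is_traj n alpha gamma beta xu xs a b -> a <= t <= b -> 0 < F t ->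
  derivable_pt_lim (fun y => Rpower (trajnorm n xu xs y) (- alpha)) t
    (alpha * (beta * S t - gamma * xu t ^ 2) / F t).
Proof.
  intros H Ht HF. unfold trajnorm, enorm.
  assert (HN : 0 < sqrt (F t)) by (apply sqrt_lt_R0; exact HF).
  eapply D_eq.
  apply (D_comp (fun y => sqrt (F y)) (fun z => Rpower z (- alpha))).
  apply (D_comp F sqrt). apply (F_deriv a b t H Ht). apply derivable_pt_lim_sqrt. exact HF.
  apply derivable_pt_lim_power. exact HN.
  assert (Hk : Rpower (sqrt (F t)) (- alpha - 1) * Rpower (sqrt (F t)) alpha = / sqrt (F t)).
  { rewrite <- Rpower_plus. replace (- alpha - 1 + alpha) with (Ropp 1) by ring.
    rewrite Rpower_Ropp, Rpower_1; auto. }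
  unfold c, trajnorm, enorm. fold (S t). fold (F t).
  assert (HNN : sqrt (F t) * sqrt (F t) = F t) by (apply sqrt_sqrt; lra).
  replace (- alpha * Rpower (sqrt (F t)) (- alpha - 1) *
    (/ (2 * sqrt (F t)) * (2 * Rpower (sqrt (F t)) alpha * (gamma * xu t ^ 2 - beta * S t))))
   with (- alpha * (Rpower (sqrt (F t)) (- alpha - 1) * Rpower (sqrt (F t)) alpha) *
    (/ (2 * sqrt (F t)) * (2 * (gamma * xu t ^ 2 - beta * S t)))) by ring.
  rewrite Hk. set (N := sqrt (F t)) in *. rewrite <- HNN. field. lra.
Qed.

Lemma q2 t : xu t <> 0 ->
  (sqrt (S t) / Rabs (xu t)) ^ 2 = S t / xu t ^ 2.
Proof.
  intros Hu. pose proof (sqnorm_ge0 n (fun i => xs i t)). fold (S t) in H.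
  unfold Rdiv. rewrite Rpow_mult_distr, pow_inv, pow2_sqrt, <- Rsqr_pow2, <- Rsqr_abs, Rsqr_pow2 by lra.
  reflexivity.
Qed.

Lemma trig_eq t : 0 < F t ->
  beta * sin (theta n xu xs t) ^ 2 - gamma * cos (theta n xu xs t) ^ 2
  = (beta * S t - gamma * xu t ^ 2) / F t.
Proof.
  intros HF. unfold theta. destruct (Req_EM_T (xu t) 0) as [E|E].
  - rewrite sin_PI2, cos_PI2. unfold F in *. rewrite E in *. field.
    replace (0 ^ 2 + S t) with (S t) in HF by ring. lra.
  - fold (S t). rewrite atan_form, q2 by exact E. unfold F.
    assert (0 < xu t ^ 2) by (pose proof (Rsqr_pos_lt _ E); unfold Rsqr in *; nra).
    field. split. unfold F in HF. lra. exact E.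
Qed.

Lemma tan_eq t : xu t <> 0 -> tan (theta n xu xs t) = sqrt (S t) / Rabs (xu t).
Proof. intros E. unfold theta. destruct (Req_EM_T (xu t) 0). contradiction.
  apply tan_atan. Qed.

Lemma W_deriv a b t : is_traj n alpha gamma beta xu xs a b -> a <= t <= b -> xu t <> 0 ->
  derivable_pt_lim (fun y => S y / xu y ^ 2) t (- (2 * c t * (beta + gamma) * S t / xu t ^ 2)).
Proof.
  intros H Ht E.
  assert (0 < xu t ^ 2) by (pose proof (Rsqr_pos_lt _ E); unfold Rsqr in *; nra).
  eapply D_eq. apply (derivable_pt_lim_div S (fun y => xu y ^ 2)).
  apply (S_deriv a b t H Ht). apply D_sq. apply (H t Ht). lra.
  unfold Rsqr, c. field. exact E.
Qed.
End T.

Lemma xi_cmp a b g S u2 s : 0 < a -> 0 < b -> 0 < g -> 0 < u2 -> 0 <= S ->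
  a * (b * S - g * u2) / (u2 + S) - a * xi b g s
  = a * (b + g) * (S - s ^ 2 * u2) / ((u2 + S) * (s ^ 2 + 1)).
Proof. intros. unfold xi. field. split. pose proof (pow2_ge_0 s); lra. lra. Qed.

Lemma xi_ge a b g S u2 s : 0 < a -> 0 < b -> 0 < g -> 0 < u2 -> 0 <= S ->
  s ^ 2 <= S / u2 -> a * xi b g s <= a * (b * S - g * u2) / (u2 + S).
Proof.
  intros. pose proof (xi_cmp a b g S u2 s H H0 H1 H2 H3).
  assert (0 <= S - s ^ 2 * u2).
  { apply Rmult_le_compat_r with (r := u2) in H4; [|lra].
    unfold Rdiv in H4. rewrite Rmult_assoc, Rinv_l in H4; lra. }
  assert (0 <= a * (b + g) * (S - s ^ 2 * u2) / ((u2 + S) * (s ^ 2 + 1))).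
  { apply Rmult_le_pos. apply Rmult_le_pos. nra. lra.
    left; apply Rinv_0_lt_compat. pose proof (pow2_ge_0 s). nra. }
  lra.
Qed.

Lemma xi_le a b g S u2 s : 0 < a -> 0 < b -> 0 < g -> 0 < u2 -> 0 <= S ->
  S / u2 <= s ^ 2 -> a * (b * S - g * u2) / (u2 + S) <= a * xi b g s.
Proof.
  intros. pose proof (xi_cmp a b g S u2 s H H0 H1 H2 H3).
  assert (S - s ^ 2 * u2 <= 0).
  { apply Rmult_le_compat_r with (r := u2) in H4; [|lra].
    unfold Rdiv in H4. rewrite Rmult_assoc, Rinv_l in H4; lra. }
  assert (a * (b + g) * (S - s ^ 2 * u2) / ((u2 + S) * (s ^ 2 + 1)) <= 0).
  { unfold Rdiv. rewrite <- (Rmult_0_l (/ ((u2 + S) * (s ^ 2 + 1)))).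
    apply Rmult_le_compat_r. left; apply Rinv_0_lt_compat. pose proof (pow2_ge_0 s). nra.
    assert (0 < a * (b + g)) by nra. nra. }
  lra.
Qed.

Lemma F0_pos n xu xs t : trajnorm n xu xs t <> 0 -> 0 < xu t ^ 2 + sqnorm n (fun i => xs i t).
Proof.
  intros H. pose proof (sqnorm_ge0 n (fun i => xs i t)). pose proof (pow2_ge_0 (xu t)).
  destruct (Req_dec (xu t ^ 2 + sqnorm n (fun i => xs i t)) 0) as [E|E].
  - exfalso. apply H. unfold trajnorm, enorm. rewrite E. apply sqrt_0.
  - lra.
Qed.

Theorem lemma7p2 (n : nat) (alpha gamma beta r0 : R)
  (xu : R -> R) (xs : nat -> R -> R) :
  0 < alpha < 1 -> 0 < gamma -> 0 < beta -> 0 < r0 ->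
  (forall T : R, 0 <= T ->
     is_traj n alpha gamma beta xu xs 0 T ->
     (forall t, 0 <= t <= T -> trajnorm n xu xs t < r0) ->
     trajnorm n xu xs 0 <> 0 ->
     forall t, 0 <= t <= T ->
       derivable_pt_lim (fun u => Rpower (trajnorm n xu xs u) (- alpha)) t
         (alpha * (beta * sin (theta n xu xs t) ^ 2
                   - gamma * cos (theta n xu xs t) ^ 2)) /\
       (xu t <> 0 ->
          alpha * (beta * sin (theta n xu xs t) ^ 2
                   - gamma * cos (theta n xu xs t) ^ 2)
          = alpha * xi beta gamma (tan (theta n xu xs t))) /\
       - gamma * alpha <= alpha * (beta * sin (theta n xu xs t) ^ 2
                                   - gamma * cos (theta n xu xs t) ^ 2)
                       <= beta * alpha /\
       Rpower (trajnorm n xu xs t) (- alpha)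
         <= Rpower (trajnorm n xu xs T) (- alpha) + gamma * alpha * (T - t) /\
       Rpower (trajnorm n xu xs t) (- alpha)
         <= Rpower (trajnorm n xu xs 0) (- alpha) + beta * alpha * t)
  /\
  (forall T0 s Ts : R, 0 <= T0 ->
     is_traj n alpha gamma beta xu xs 0 T0 ->
     trajnorm n xu xs 0 = r0 -> trajnorm n xu xs T0 = r0 ->
     (forall t, 0 < t < T0 -> trajnorm n xu xs t < r0) ->
     Rbar_lt (Finite s) (tantheta n xu xs 0) ->
     Rbar_lt (tantheta n xu xs T0) (Finite s) ->
     0 <= Ts <= T0 -> tantheta n xu xs Ts = Finite s ->
     (forall t, 0 <= t <= Ts ->
        Rpower (trajnorm n xu xs t) (- alpha)
          >= Rpower r0 (- alpha) + alpha * xi beta gamma s * t) /\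
     (forall t, Ts <= t <= T0 ->
        Rpower (trajnorm n xu xs t) (- alpha)
          >= Rpower r0 (- alpha) - alpha * xi beta gamma s * (T0 - t))).
Proof.
  intros Ha Hg Hb Hr. split.
  - intros T HT0 HT Hin HN0.
    assert (HF : forall t, 0 <= t <= T -> 0 < xu t ^ 2 + sqnorm n (fun i => xs i t)).
    { apply (F_pos n alpha gamma beta xu xs T r0); try lra. exact HT.
      intros t Ht; left; apply Hin; exact Ht. apply F0_pos; exact HN0. }
    set (D := fun x => alpha * (beta * sin (theta n xu xs x) ^ 2
                   - gamma * cos (theta n xu xs x) ^ 2)).
    set (P := fun u => Rpower (trajnorm n xu xs u) (- alpha)).
    assert (HD : forall x, 0 <= x <= T -> derivable_pt_lim P x (D x)).
    { intros x Hx. unfold D. rewrite (trig_eq n gamma beta xu xs x (HF x Hx)).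
      eapply D_eq. apply (P_deriv n alpha gamma beta xu xs 0 T x HT Hx (HF x Hx)).
      field. pose proof (HF x Hx); lra. }
    assert (HB : forall x, - gamma * alpha <= D x <= beta * alpha).
    { intros x. unfold D. pose proof (sin2_cos2 (theta n xu xs x)). rewrite !Rsqr_pow2 in H.
      pose proof (pow2_ge_0 (sin (theta n xu xs x))).
      pose proof (pow2_ge_0 (cos (theta n xu xs x))).
      set (a := sin (theta n xu xs x) ^ 2) in *. set (b := cos (theta n xu xs x) ^ 2) in *.
      assert (0 <= alpha * beta * a) by (apply Rmult_le_pos; nra).
      assert (0 <= alpha * gamma * a) by (apply Rmult_le_pos; nra).
      assert (0 <= alpha * beta * b) by (apply Rmult_le_pos; nra).
      assert (0 <= alpha * gamma * b) by (apply Rmult_le_pos; nra).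
      replace b with (1 - a) in * by lra. split; nra. }
    intros t Ht. split; [|split; [|split; [|split]]].
    + exact (HD t Ht).
    + intros E. unfold theta. destruct (Req_EM_T (xu t) 0). contradiction.
      rewrite tan_atan, atan_form. reflexivity.
    + exact (HB t).
    + assert (P t + gamma * alpha * t <= P T + gamma * alpha * T).
      { apply (mono_le (fun x => P x + gamma * alpha * x) (fun x => D x + gamma * alpha)). lra.
        intros x Hx. apply D_plus. apply HD; lra. eapply D_eq.
        apply (D_mult (fun _ => gamma * alpha) (fun x => x)). apply D_const.
        apply derivable_pt_lim_id. ring.
        intros x Hx. pose proof (HB x). lra. }
      unfold P in H. lra.
    + assert (beta * alpha * 0 - P 0 <= beta * alpha * t - P t).
      { apply (mono_le (fun x => beta * alpha * x - P x) (fun x => beta * alpha - D x)). lra.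
        intros x Hx. apply D_plus. eapply D_eq.
        apply (D_mult (fun _ => beta * alpha) (fun x => x)). apply D_const.
        apply derivable_pt_lim_id. ring. apply D_opp. apply HD; lra.
        intros x Hx. pose proof (HB x). lra. }
      unfold P in H. lra.
  - intros T0 s Ts HT0 HT HN0 HNT Hin _ HtT Hts HtTs.
    assert (Hle : forall t, 0 <= t <= T0 -> trajnorm n xu xs t <= r0).
    { intros t Ht. destruct (Req_dec t 0) as [->|E1]. lra.
      destruct (Req_dec t T0) as [->|E2]. lra. left; apply Hin; lra. }
    assert (HF : forall t, 0 <= t <= T0 -> 0 < xu t ^ 2 + sqnorm n (fun i => xs i t)).
    { apply (F_pos n alpha gamma beta xu xs T0 r0); try lra. exact HT. exact Hle.
      apply F0_pos; lra. }
    assert (HuT : xu T0 <> 0).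
    { unfold tantheta in HtT. destruct (Req_EM_T (xu T0) 0). simpl in HtT; contradiction. exact n0. }
    assert (Hu : forall t, 0 <= t <= T0 -> xu t <> 0).
    { apply (u_nz n alpha gamma beta xu xs T0 r0); try lra. exact HT. exact Hle. }
    set (W := fun y => sqnorm n (fun i => xs i y) / xu y ^ 2).
    assert (HWs : W Ts = s ^ 2).
    { unfold W. rewrite <- q2 by (apply Hu; lra). rewrite <- tan_eq by (apply Hu; lra).
      unfold tantheta in HtTs. destruct (Req_EM_T (xu Ts) 0). discriminate.
      injection HtTs as ->. reflexivity. }
    assert (HWm : forall x y, 0 <= x -> x <= y -> y <= T0 -> W y <= W x).
    { intros x y Hx Hxy Hy.
      assert (- W x <= - W y).
      { apply (mono_le (fun z => - W z)
          (fun z => 2 * Rpower (trajnorm n xu xs z) alpha * (beta + gamma) * sqnorm n (fun i => xs i z) / xu z ^ 2)).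
        lra. intros z Hz. eapply D_eq. apply D_opp.
        apply (W_deriv n alpha gamma beta xu xs 0 T0 z HT ltac:(lra)). apply Hu; lra. ring.
        intros z Hz. pose proof (c_bounds n alpha xu xs r0 z Hr ltac:(lra) (Hle z ltac:(lra))).
        pose proof (sqnorm_ge0 n (fun i => xs i z)).
        assert (0 < xu z ^ 2) by (pose proof (Rsqr_pos_lt _ (Hu z ltac:(lra))); unfold Rsqr in *; nra).
        unfold Rdiv. apply Rmult_le_pos. apply Rmult_le_pos. apply Rmult_le_pos. lra. lra. lra.
        left; apply Rinv_0_lt_compat; lra. }
      lra. }
    set (P := fun u => Rpower (trajnorm n xu xs u) (- alpha)).
    set (D := fun t => alpha * (beta * sqnorm n (fun i => xs i t) - gamma * xu t ^ 2)
                        / (xu t ^ 2 + sqnorm n (fun i => xs i t))).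
    assert (HD : forall x, 0 <= x <= T0 -> derivable_pt_lim P x (D x)).
    { intros x Hx. apply (P_deriv n alpha gamma beta xu xs 0 T0 x HT Hx (HF x Hx)). }
    assert (Hpos : forall x, 0 <= x <= T0 -> 0 < xu x ^ 2 /\ 0 <= sqnorm n (fun i => xs i x)).
    { intros x Hx. split. pose proof (Rsqr_pos_lt _ (Hu x Hx)); unfold Rsqr in *; nra.
      apply sqnorm_ge0. }
    assert (HP0 : P 0 = Rpower r0 (- alpha)) by (unfold P; rewrite HN0; reflexivity).
    assert (HPT : P T0 = Rpower r0 (- alpha)) by (unfold P; rewrite HNT; reflexivity).
    split.
    + intros t Ht.
      assert (P 0 - alpha * xi beta gamma s * 0 <= P t - alpha * xi beta gamma s * t).
      { apply (mono_le (fun x => P x - alpha * xi beta gamma s * x)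
                       (fun x => D x - alpha * xi beta gamma s)). lra.
        intros x Hx. apply D_plus. apply HD; lra. eapply D_eq. apply D_opp.
        apply (D_mult (fun _ => alpha * xi beta gamma s) (fun x => x)). apply D_const.
        apply derivable_pt_lim_id. ring.
        intros x Hx. destruct (Hpos x ltac:(lra)) as [H1 H2].
        assert (alpha * xi beta gamma s <= D x).
        { unfold D.
          apply xi_ge; try lra. rewrite <- HWs. apply HWm; lra. }
        lra. }
      rewrite Rmult_0_r, HP0 in H. unfold P in H. lra.
    + intros t Ht.
      assert (alpha * xi beta gamma s * t - P t <= alpha * xi beta gamma s * T0 - P T0).
      { apply (mono_le (fun x => alpha * xi beta gamma s * x - P x)
                       (fun x => alpha * xi beta gamma s - D x)). lra.
        intros x Hx. apply D_plus. eapply D_eq.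
        apply (D_mult (fun _ => alpha * xi beta gamma s) (fun x => x)). apply D_const.
        apply derivable_pt_lim_id. ring. apply D_opp. apply HD; lra.
        intros x Hx. destruct (Hpos x ltac:(lra)) as [H1 H2].
        assert (D x <= alpha * xi beta gamma s).
        { unfold D.
          apply xi_le; try lra. rewrite <- HWs. apply HWm; lra. }
        lra. }
      rewrite HPT in H. unfold P in H. nra.
Qed.
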